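(* Let $T$ be a tree. Then for every dominating set $S$ of $T$, $|a(S)|\le 2\Gamma(T)-|S|$.
   Context: A dominating set of a graph $G=(V,E)$ is a set $S\subseteq V$ such that every vertex is in $S$ or adjacent to a vertex of $S$; it is minimal if no proper subset is dominating. $\Gamma(T)$ is the maximum size of a minimal dominating set of $T$. For a dominating set $S$, $a(S)=\{v\in S: S\setminus\{v\}\text{ is not a dominating set}\}$. *)

(* Defs.v *)
From mathcomp Require Import all_boot.
Set Implicit Arguments. Unset Strict Implicit. Unset Printing Implicit Defensive.

Definition simple_graph (T : finType) (e : rel T) : Prop :=
  symmetric e /\ irreflexive e.

Definition edges (T : finType) (e : rel T) : {set {set T}} :=
  [set [set x; y] | x in T, y in T & e x y].

Definition connected_graph (T : finType) (e : rel T) : Prop :=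
  forall x y : T, connect e x y.

Definition is_tree (T : finType) (e : rel T) : Prop :=
  [/\ simple_graph e, 0 < #|T|, connected_graph e & #|edges e| = #|T| - 1].

Definition dominated (T : finType) (e : rel T) (S : {set T}) (v : T) : bool :=
  (v \in S) || [exists u in S, e u v].

Definition dominating (T : finType) (e : rel T) (S : {set T}) : bool :=
  [forall v, dominated e S v].

Definition minimal_dominating (T : finType) (e : rel T) (S : {set T}) : bool :=
  dominating e S && [forall S' : {set T}, (S' \proper S) ==> ~~ dominating e S'].

Definition Gamma (T : finType) (e : rel T) : nat :=
  \max_(S : {set T} | minimal_dominating e S) #|S|.

Definition aS (T : finType) (e : rel T) (S : {set T}) : {set T} :=
  [set v in S | ~~ dominating e (S :\ v)].

(* Main.v *)
Require Import Defs.
From mathcomp Require Import all_boot.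
From mathcomp Require Import zify.
Set Implicit Arguments. Unset Strict Implicit. Unset Printing Implicit Defensive.

Definition tpath_to (T : finType) (e : rel T) (r v : T) (n : nat) : bool :=
  [exists t : n.-tuple T, path e r t && (last r t == v)].

Lemma tpathP (T : finType) (e : rel T) (r v : T) (n : nat) :
  reflect (exists s : seq T, [/\ size s == n, path e r s & last r s == v])
          (tpath_to e r v n).
Proof.
apply: (iffP existsP) => [[t /andP[pt lt]] | [s [sz pt lt]]].
  by exists (tval t); rewrite size_tuple eqxx pt lt.
by exists (Tuple sz); rewrite /= pt lt.
Qed.

Lemma tree_bip (T : finType) (e : rel T) :
  is_tree e -> exists c : T -> bool, forall x y, e x y -> c x != c y.
Proof.
case=> [[es ei] Tn conn Ecard].
have [r _] : exists r : T, r \in T by apply/card_gt0P.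
have exP v : exists n, tpath_to e r v n.
  move/connectP: (conn r v) => [p pp ->]; exists (size p).
  by apply/tpathP; exists p; rewrite eqxx pp eqxx.
pose d v := ex_minn (exP v).
have dP v : tpath_to e r v (d v) /\ forall n, tpath_to e r v n -> d v <= n.
  by rewrite /d; case: ex_minnP.
have dpos v : v != r -> 0 < d v.
  move=> vr; case: (dP v) => /tpathP [s [sz ps ls]] _.
  case: s sz ps ls => [|x s] sz; last by rewrite -(eqP sz).
  by move=> _ /= lv; rewrite (eqP lv) eqxx in vr.
have par_ex v : v != r -> exists w, e w v && (d w == (d v).-1).
  move=> vr; case: (dP v) => /tpathP [s [sz ps ls]] _.
  case/lastP: s sz ps ls => [|s x] sz ps ls.
    by move: ls vr => /= /eqP ->; rewrite eqxx.
  rewrite last_rcons in ls; rewrite (eqP ls) in ps.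
  rewrite rcons_path in ps; case/andP: ps => ps ew.
  exists (last r s); rewrite ew /=.
  have h1 : d (last r s) <= size s.
    by case: (dP (last r s)) => _ /(_ (size s)) -> //; apply/tpathP; exists s; rewrite !eqxx ps.
  have h2 : d v <= (d (last r s)).+1.
    case: (dP (last r s)) => /tpathP [s' [sz' ps' ls']] _.
    case: (dP v) => _ /(_ (d (last r s)).+1) -> //; apply/tpathP; exists (rcons s' v).
    by rewrite size_rcons (eqP sz') rcons_path ps' (eqP ls') ew last_rcons eqxx.
  rewrite size_rcons in sz; move/eqP: sz => sz.
  apply/eqP; lia.
pose par v := odflt v [pick w | e w v && (d w == (d v).-1)].
have parP v : v != r -> e (par v) v /\ d (par v) = (d v).-1.
  move=> vr; rewrite /par; case: pickP => [w /andP [ew /eqP dw] //|H].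
  by case: (par_ex v vr) => w; rewrite H.
pose F := [set [set par v; v] | v in [set~ r]].
have Finj : {in [set~ r] &, injective (fun v => [set par v; v])}.
  move=> v w; rewrite !inE => vr wr /= eqs.
  case: (eqVneq v w) => // vw; exfalso.
  have : v \in [set par w; w] by rewrite -eqs !inE eqxx orbT.
  rewrite !inE; rewrite (negbTE vw) orbF => /eqP vpw.
  have : w \in [set par v; v] by rewrite eqs !inE eqxx orbT.
  rewrite !inE => /orP [/eqP wpv|/eqP wv']; last by rewrite wv' eqxx in vw.
  have := parP v vr; have := parP w wr; have := dpos v vr; have := dpos w wr.
  rewrite -vpw -wpv => ? ? [_ ?] [_ ?]; lia.
have FE : F = edges e.
  apply/eqP; rewrite eqEcard; apply/andP; split.
    apply/subsetP => E /imsetP [v]; rewrite !inE => vr ->.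
    apply/imset2P; exists (par v) v => //; rewrite inE /=.
    by case: (parP v vr).
  by rewrite card_in_imset // cardsC1 Ecard subn1.
exists (fun v => odd (d v)) => x y exy.
have : [set x; y] \in F by rewrite FE; apply/imset2P; exists x y => //; rewrite inE.
case/imsetP => v; rewrite !inE => vr eqs.
have xy : x != y by apply/eqP => exy'; rewrite exy' ei in exy.
have [_ dp] := parP v vr; have dv := dpos v vr.
have xin : x \in [set par v; v] by rewrite -eqs !inE eqxx.
have yin : y \in [set par v; v] by rewrite -eqs !inE eqxx orbT.
move: xin yin; rewrite !inE => /orP [] /eqP xe /orP [] /eqP ye;
  try by move: xy; rewrite xe ye eqxx.
all: rewrite xe ye dp; case: (d v) dv => [|m] //= _; by case: (odd m).
Qed.
Definition indep (T : finType) (e : rel T) (M : {set T}) : bool :=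
  [forall x in M, forall y in M, ~~ e x y].

Lemma indep_Gamma (T : finType) (e : rel T) (W : {set T}) :
  symmetric e -> irreflexive e -> indep e W -> #|W| <= Gamma e.
Proof.
move=> es ei iW.
have [M /maxsetP [iM maxM] WM] := maxset_exists iW.
apply: leq_trans (subset_leq_card WM) _.
rewrite /Gamma; apply: (@leq_bigmax_cond _ (fun S => minimal_dominating e S) (fun S : {set T} => #|S|) M).
apply/andP; split.
  apply/forallP => v; rewrite /dominated.
  case vM: (v \in M) => //=.
  case: (boolP [exists u in M, e u v]) => // H; exfalso.
  have iv : indep e (v |: M).
    apply/forallP => x; apply/implyP => xin; apply/forallP => y; apply/implyP => yin.
    move: xin yin; rewrite !inE => /orP [/eqP -> | xM] /orP [/eqP -> | yM].
    - by rewrite ei.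
    - rewrite es; apply/negP => eyv; move/negP: H; apply; apply/existsP; exists y; rewrite yM.
      by [].
    - apply/negP => exv; move/negP: H; apply; apply/existsP; exists x; by rewrite xM.
    - by move/forallP: iM => /(_ x) /implyP /(_ xM) /forallP /(_ y) /implyP /(_ yM).
  have := maxM _ iv (subsetUr _ _) => eqM.
  by move: (setU11 v M); rewrite eqM vM.
apply/forallP => S'; apply/implyP => /properP [sub [v vM vS']].
apply/negP => /forallP /(_ v); rewrite /dominated (negbTE vS') /=.
case/existsP => u /andP [uS' euv].
have uM : u \in M by apply: (subsetP sub).
by move/forallP: iM => /(_ u) /implyP /(_ uM) /forallP /(_ v) /implyP /(_ vM); rewrite euv.
Qed.
Lemma split_card (T : finType) (c : T -> bool) (A : {set T}) :
  #|[set x in A | c x == true]| + #|[set x in A | c x == false]| = #|A|.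
Proof.
rewrite -(cardsID [set x | c x] A); congr (_ + _); apply: eq_card => x;
  rewrite !inE; by case: (c x); rewrite ?andbT ?andbF.
Qed.

Theorem lemma4p10 (T : finType) (e : rel T) :
  is_tree e ->
  forall S : {set T}, dominating e S ->
  #|aS e S| + #|S| <= 2 * Gamma e.
Proof.
move=> tr S domS.
have [c cP] := tree_bip tr.
case: tr => [[es ei] _ _ _].
pose p v := odflt v [pick u | ~~ dominated e (S :\ v) u].
have pP v : v \in aS e S -> ~~ dominated e (S :\ v) (p v).
  rewrite inE => /andP [vS /forallPn [u nu]].
  rewrite /p; case: pickP => [u' //|H]; by rewrite H in nu.
have vS v : v \in aS e S -> v \in S by rewrite inE => /andP [].
have F2 v s : v \in aS e S -> s \in S -> s != v -> ~~ e s (p v).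
  move=> vA sS sv; apply/negP => esp; move/negP: (pP v vA); apply.
  rewrite /dominated; apply/orP; right; apply/existsP; exists s.
  by rewrite !inE sv sS esp.
have F1 v : v \in aS e S -> p v = v \/ (p v \notin S /\ e v (p v)).
  move=> vA; move/forallP: domS => /(_ (p v)); rewrite /dominated.
  case/orP => [pS | /existsP [s /andP [sS esp]]].
    left; case: (eqVneq (p v) v) => // pv; exfalso; move/negP: (pP v vA); apply.
    by rewrite /dominated !inE pv pS.
  case: (eqVneq s v) => [sv | sv]; last by rewrite (negbTE (F2 v s vA sS sv)) in esp.
  right; split; last by rewrite sv in esp.
  apply/negP => pS; exfalso; move/negP: (pP v vA); apply.
  rewrite /dominated !inE pS andbT; apply/orP; left.
  by apply/eqP => pv; rewrite pv sv ei in esp.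
have pinj : {in aS e S &, injective p}.
  move=> v w vA wA pvw; case: (eqVneq v w) => // vw; exfalso.
  case: (F1 w wA) => [pw | [_ ewp]].
    move/negP: (pP v vA); apply.
    by rewrite /dominated !inE pvw pw eq_sym vw (vS w wA).
  have := F2 v w vA (vS w wA); rewrite eq_sym vw pvw => /(_ isT).
  by rewrite ewp.
have key b : #|[set x in S | c x == b]| + #|[set v in aS e S | c v == ~~ b]| <= Gamma e.
  pose S1 := [set x in S | c x == b].
  pose A1 := [set v in aS e S | c v == ~~ b].
  have A1A : A1 \subset aS e S by apply/subsetP => v; rewrite inE => /andP [].
  have disj : S1 :&: p @: A1 = set0.
    apply/setP => x; rewrite !inE; apply/negP => /andP [/andP [xS cx] /imsetP [v vA1 xe]].
    move: vA1; rewrite inE => /andP [vA cv].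
    case: (F1 v vA) => [pv | [pS _]]; last by rewrite -xe xS in pS.
    by move: cx cv; rewrite xe pv => /eqP ->; case Eb: b.
  have : #|S1 :|: p @: A1| <= Gamma e.
    apply: indep_Gamma => //.
    have memW x : x \in S1 :|: p @: A1 ->
        (x \in S /\ c x = b) \/ (exists2 v, v \in aS e S /\ c v = ~~ b & x = p v).
      rewrite !inE => /orP [/andP [xS /eqP cx] | /imsetP [v vA1 ->]]; first by left.
      by right; exists v => //; move: vA1; rewrite inE => /andP [? /eqP].
    have colp v : v \in aS e S -> c v = ~~ b -> p v != v -> c (p v) = b.
      move=> vA cv pv; case: (F1 v vA) => [/eqP pv' | [_ evp]]; first by rewrite pv' in pv.
      by move: (cP _ _ evp); rewrite cv; case Eb: b; case: (c (p v)).
    have noedge x y : x \in S1 :|: p @: A1 -> y \in S1 :|: p @: A1 -> ~~ e x y.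
      move=> xW yW.
      case: (memW x xW) => [[xS cx] | [w [wA cw] xe]];
        case: (memW y yW) => [[yS cy] | [v [vA cv] ye]].
      - by apply/negP => exy; move: (cP _ _ exy); rewrite cx cy eqxx.
      - rewrite ye; apply: F2 => //; apply/eqP => xv; move: cx; rewrite xv cv.
        by case Eb: b.
      - rewrite es xe; apply: F2 => //; apply/eqP => yw; move: cy; rewrite yw cw.
        by case Eb: b.
      - case: (eqVneq v w) => [vw | vw]; first by rewrite xe ye vw ei.
        case: (eqVneq (p w) w) => [pw | pw].
          by rewrite xe ye pw; apply: (F2 v w vA (vS w wA)); rewrite eq_sym.
        case: (eqVneq (p v) v) => [pv | pv].
          by rewrite es xe ye pv; apply: (F2 w v wA (vS v vA)).
        apply/negP => exy; move: (cP _ _ exy).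
        by rewrite xe ye (colp w wA cw pw) (colp v vA cv pv) eqxx.
    apply/forallP => x; apply/implyP => xW; apply/forallP => y; apply/implyP => yW.
    exact: noedge.
  rewrite cardsU disj cards0 subn0 card_in_imset //.
  by move=> v w /(subsetP A1A) vA /(subsetP A1A) wA; apply: pinj.
have k1 := key true; have k2 := key false.
have s1 := split_card c S.
have s2 := split_card c (aS e S).
simpl in k1, k2. lia.
Qed.
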